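(* Let $Z\sim N(0,1)$ and let $x=(x_1,\ldots,x_n)$ be a vector of i.i.d. symmetric Bernoulli random variables (taking values $\pm1$ with probability $1/2$ each). Fix $u\in S^{n-1}$ and let $X=\langle u,x\rangle$. Then for every $\sigma\in(0,1)$, $$\mathbb{E}\exp(\sigma^2X^2/2)\le\mathbb{E}\exp(\sigma^2Z^2/2)=\frac{1}{\sqrt{1-\sigma^2}}.$$ Furthermore, the sub-gaussian norm $\alpha(n):=\|x\|_{\psi_2}$ satisfies $\alpha(n)\le\sqrt{8}/\sqrt{3}$ and $\alpha(n)\to\sqrt{8}/\sqrt{3}$ as $n\to\infty$.
   Context: For a real random variable $Y$, $\|Y\|_{\psi_2}=\inf\{t>0:\mathbb{E}\exp(Y^2/t^2)\le2\}$; for a random vector $X\in\mathbb{R}^n$, $\|X\|_{\psi_2}=\sup_{u\in S^{n-1}}\|\langle X,u\rangle\|_{\psi_2}$, where $S^{n-1}$ is the unit sphere in $\mathbb{R}^n$. *)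

(* Defs.v *)
From HB Require Import structures.
From mathcomp Require Import all_boot all_order all_algebra.
From mathcomp Require Import all_classical all_reals all_analysis.
Set Implicit Arguments. Unset Strict Implicit. Unset Printing Implicit Defensive.
Import Order.TTheory GRing.Theory Num.Theory.
Local Open Scope ring_scope.
Local Open Scope classical_set_scope.

(* A realization of the Bernoulli vector x = (x_1,...,x_n): a sign pattern
   s : {ffun 'I_n -> bool}, with x_i = +1 if s i and -1 otherwise.  Since
   the x_i are i.i.d. symmetric Bernoulli, x is uniformly distributed on
   the 2^n sign patterns. *)
Definition sgn {R : pzRingType} (b : bool) : R := if b then 1 else -1.

Definition bern_E {R : realType} (n : nat) (f : {ffun 'I_n -> bool} -> R) : R :=
  (2 ^+ n)^-1 * \sum_(s : {ffun 'I_n -> bool}) f s.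

Definition bern_dot {R : realType} (n : nat) (u : 'rV[R]_n)
  (s : {ffun 'I_n -> bool}) : R := \sum_(i < n) u 0 i * sgn (s i).

Definition unit_sphere {R : realType} (n : nat) : set 'rV[R]_n :=
  [set u | \sum_(i < n) u 0 i ^+ 2 = 1].

Definition bern_psi2 {R : realType} (n : nat) (Y : {ffun 'I_n -> bool} -> R) : R :=
  inf [set t : R | 0 < t /\ bern_E (fun s => expR (Y s ^+ 2 / t ^+ 2)) <= 2].

Definition alpha {R : realType} (n : nat) : R :=
  sup [set bern_psi2 (bern_dot u) | u in @unit_sphere R n].

Definition gauss_E {R : realType} (g : R -> R) : \bar R :=
  (\int[normal_prob 0 1]_x (g x)%:E)%E.

(* Main.v *)
Require Import Defs.
From HB Require Import structures.
From mathcomp Require Import all_boot all_order all_algebra.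
From mathcomp Require Import all_classical all_reals all_analysis.
From mathcomp Require Import measurable_realfun.
From mathcomp Require Import ring lra zify.
Import Order.TTheory GRing.Theory Num.Theory.
Import numFieldTopology.Exports.
Local Open Scope ring_scope.
Local Open Scope classical_set_scope.

Section S.
Context {R : realType}.
Local Open Scope ereal_scope.
Notation mu := (@lebesgue_measure R).
Lemma gauss_density (F : R -> \bar R) : (forall x, 0 <= F x) -> measurable_fun [set: R] F ->
  \int[normal_prob 0 1]_x F x = \int[mu]_x (F x * (normal_pdf 0 1 x)%:E).
Proof.
move=> F0 mF.
have numu := @normal_prob_dominates R 0 1.
rewrite -(Radon_Nikodym_SigmaFinite.change_of_variables numu F0 measurableT mF).
apply: ae_eq_integral => //.
- apply: emeasurable_funM => //.
  exact: measurable_int (Radon_Nikodym_SigmaFinite.f_integrable numu).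
- apply: emeasurable_funM => //.
  by apply/measurable_EFinP; exact: measurable_normal_pdf.
apply: ae_eqe_mul2l.
apply: integral_ae_eq => //.
- exact: Radon_Nikodym_SigmaFinite.f_integrable numu.
- by apply/measurable_EFinP; exact: measurable_normal_pdf.
move=> E _ mE.
by rewrite -Radon_Nikodym_SigmaFinite.f_integral.
Qed.

Lemma normal_pdf_eq (m s x : R) : s != 0%R ->
  normal_pdf m s x = (normal_peak s * expR (- (x - m) ^+ 2 / (s ^+ 2 *+ 2)))%R.
Proof. by move=> s0; rewrite /normal_pdf (negbTE s0). Qed.

Lemma gauss_mgf (a : R) :
  \int[normal_prob 0 1]_x (expR (a * x))%:E = (expR (a ^+ 2 / 2))%:E.
Proof.
rewrite gauss_density; last 2 first.
- by move=> x; rewrite lee_fin expR_ge0.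
- by apply/measurable_EFinP; apply: measurableT_comp => //; do ?[apply: measurable_funM => //]; exact: measurable_funX.
transitivity (\int[mu]_x ((expR (a ^+ 2 / 2))%:E * (normal_pdf a 1 x)%:E)).
  apply: eq_integral => x _.
  rewrite -!EFinM !normal_pdf_eq ?oner_eq0// expr1n mulrCA -expRD [in RHS]mulrCA -expRD.
  congr (_ * expR _)%:E.
  by rewrite subr0; field.
rewrite integralZl//=; last exact: integrable_normal_pdf.
by rewrite integral_normal_pdf mule1.
Qed.

Lemma gauss_sq (c : R) : (0 <= c < 1)%R ->
  \int[normal_prob 0 1]_x (expR (c * x ^+ 2 / 2))%:E = ((Num.sqrt (1 - c))^-1)%:E.
Proof.
case/andP => c0 c1.
have c1' : (0 < 1 - c)%R by rewrite subr_gt0.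
set s := ((Num.sqrt (1 - c))^-1)%R.
have s0 : (0 < s)%R by rewrite invr_gt0 sqrtr_gt0.
have s2 : (s ^+ 2 = (1 - c)^-1)%R by rewrite exprVn sqr_sqrtr// ltW.
rewrite gauss_density; last 2 first.
- by move=> x; rewrite lee_fin expR_ge0.
- by apply/measurable_EFinP; apply: measurableT_comp => //; do ?[apply: measurable_funM => //]; exact: measurable_funX.
transitivity (\int[mu]_x (s%:E * (normal_pdf 0 s x)%:E)).
  apply: eq_integral => x _.
  rewrite -!EFinM !normal_pdf_eq ?oner_eq0 ?gt_eqF// expr1n.
  have -> : normal_peak 1 = (s * normal_peak s)%R.
    by rewrite /normal_peak expr1n mul1r -mulrnAr sqrtrM ?sqr_ge0// sqrtr_sqr gtr0_norm// invfM mulrA divff ?gt_eqF// mul1r.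
  rewrite -!mulrA mulrCA [X in (s * X)%R]mulrCA -expRD; congr (_ * (_ * expR _))%:E.
  rewrite s2 !subr0; field.
  by rewrite gt_eqF.
rewrite integralZl//=; last exact: integrable_normal_pdf.
by rewrite integral_normal_pdf mule1.
Qed.
End S.
Section S.
Context {R : realType}.

Definition ch (y : R) := (expR y + expR (- y)) / 2.

Definition cht (y : R) k := y ^+ k / k`!%:R + (- y) ^+ k / k`!%:R.

Lemma fact_double j : (2 ^ j * j`! <= (j.*2)`!)%N.
Proof.
elim: j => [//|j IH].
rewrite doubleS !factS expnS -!muln2 in IH *.
nia.
Qed.

Lemma cht_even y j : cht y (j.*2) = 2 * (y ^+ (j.*2) / (j.*2)`!%:R).
Proof.
rewrite /cht exprNn -signr_odd odd_double expr0 mul1r.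
by rewrite mulr2n mulrDl !mul1r.
Qed.

Lemma cht_odd y j : cht y (j.*2).+1 = 0.
Proof.
rewrite /cht exprNn -signr_odd /= odd_double /= expr1 mulN1r.
by rewrite mulNr addrN.
Qed.

Lemma cht_ge0 y k : 0 <= cht y k.
Proof.
rewrite -(odd_double_half k); case: (odd k) => /=.
  by rewrite add1n cht_odd.
rewrite add0n cht_even mulr_ge0// divr_ge0// exprn_even_ge0//.
by rewrite odd_double.
Qed.

Lemma cht_cvg y : (fun N => \sum_(0 <= k < N) cht y k) @ \oo --> expR y + expR (- y).
Proof.
under eq_fun do rewrite big_split.
apply: cvgD.
- exact: (is_cvg_series_exp_coeff y).
- exact: (is_cvg_series_exp_coeff (- y)).
Qed.
End S.
Section S2.
Context {R : realType}.

Lemma sum_cht_double (y : R) N : \sum_(0 <= k < N.*2) cht y k =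
  \sum_(0 <= j < N) 2 * (y ^+ (j.*2) / (j.*2)`!%:R).
Proof.
elim: N => [|N IH]; first by rewrite !big_geq.
by rewrite doubleS !big_nat_recr //= IH cht_odd addr0 cht_even.
Qed.

Lemma ch_le (y : R) : ch y <= expR (y ^+ 2 / 2).
Proof.
rewrite /ch ler_pdivrMr // mulrC.
have L1 := cht_cvg y.
have L2 : (fun N => 2 * \sum_(0 <= k < N) exp_coeff (y ^+ 2 / 2) k) @ \oo -->
    2 * expR (y ^+ 2 / 2).
  apply: (@cvgM _ _ _ _ (fun=> 2) (fun N => \sum_(0 <= k < N) exp_coeff (y ^+ 2 / 2) k)).
    exact: cvg_cst.
  exact: (is_cvg_series_exp_coeff (y ^+ 2 / 2)).
apply: (ler_cvg_to L1 L2); apply: nearW => N.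
apply: (@le_trans _ _ (\sum_(0 <= k < N.*2) cht y k)).
  rewrite [X in _ <= X](@big_cat_nat _ _ _ N) //=; last by rewrite -addnn leq_addr.
  by rewrite lerDl sumr_ge0 // => i _; exact: cht_ge0.
rewrite sum_cht_double mulr_sumr; apply: ler_sum => j _.
rewrite ler_pM2l // /exp_coeff /= exprMn exprVn -exprM mul2n.
rewrite -[leRHS]mulrA -invfM; apply: ler_wpM2l; first by rewrite exprn_even_ge0 // odd_double.
rewrite lef_pV2 ?posrE ?ltr0n ?fact_gt0 ?mulr_gt0 ?exprn_gt0 ?ltr0n ?fact_gt0 //.
by rewrite -natrX -natrM ler_nat fact_double.
Qed.

Lemma ch_ge (y : R) : 1 + y ^+ 2 / 2 <= ch y.
Proof.
rewrite /ch ler_pdivlMr //.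
have L1 := cht_cvg y.
have nd : nondecreasing_seq (fun N => \sum_(0 <= k < N) cht y k).
  apply/nondecreasing_seqP => n; rewrite big_nat_recr //= lerDl; exact: cht_ge0.
have := nondecreasing_cvgn_le nd (cvgP _ L1) 3.
rewrite (cvg_lim _ L1) //; apply: le_trans.
rewrite !big_nat_recr //= big_geq // add0r /cht /= !expr0 !expr1 expr2.
rewrite sqrrN expr2 !fact0 (_ : 1`! = 1)// (_ : 2`! = 2)// !divr1 addrN addr0.
rewrite le_eqVlt; apply/orP; left; apply/eqP; by field.
Qed.
End S2.
Section S4.
Context {R : realType}.
Lemma bern_prod n (u : 'rV[R]_n) (b : R) :
  (2 ^+ n)^-1 * \sum_(s : {ffun 'I_n -> bool}) expR (b * bern_dot u s) =
  \prod_(i < n) ch (b * u 0 i).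
Proof.
under eq_bigr do rewrite /bern_dot mulr_sumr expR_sum.
rewrite -(bigA_distr_bigA (fun i (c : bool) => expR (b * (u 0 i * sgn c)))).
under eq_bigr do rewrite big_bool /= /sgn mulr1 mulrN1.
rewrite /ch big_split /= prodr_const card_ord exprVn mulrC.
by under eq_bigr do rewrite mulrN.
Qed.
Lemma bern_gauss n (u : 'rV[R]_n) (a : R) :
  (bern_E (fun s => expR (a ^+ 2 * bern_dot u s ^+ 2 / 2)))%:E =
  (\int[normal_prob 0 1]_z (\prod_(i < n) ch (z * a * u 0 i))%:E)%E.
Proof.
rewrite /bern_E EFinM -sumEFin.
under eq_bigr => s _ do rewrite -exprMn -gauss_mgf.
rewrite -ge0_integral_sum //; last first.
  move=> s; apply/measurable_EFinP; apply: measurableT_comp => //.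
rewrite -(@ge0_integralZl _ _ _ (normal_prob 0 1) setT measurableT) //; last 2 first.
- apply: emeasurable_sum => s; apply/measurable_EFinP.
  by apply: measurableT_comp => //.
- by move=> x _; rewrite sume_ge0 // => s _; rewrite lee_fin expR_ge0.
apply: eq_integral => z _.
rewrite sumEFin -EFinM -bern_prod; congr (_ * _)%:E.
by apply: eq_bigr => s _; rewrite mulrC mulrA.
Qed.
Lemma ch_ge0 (y : R) : 0 <= ch y.
Proof. by rewrite /ch divr_ge0 // addr_ge0 // expR_ge0. Qed.

Lemma measurable_ch_prod n (c : 'I_n -> R) :
  measurable_fun [set: R] (fun z => \prod_(i < n) ch (z * c i)).
Proof.
apply: measurable_prod => i _; rewrite /ch; apply: measurable_funM => //.
apply: measurable_funD; apply: measurableT_comp => //.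
- exact: mulrr_measurable.
- apply: measurable_funN; exact: mulrr_measurable.
Qed.

Lemma bern_le n (u : 'rV[R]_n) (a : R) : \sum_(i < n) u 0 i ^+ 2 = 1 ->
  ((bern_E (fun s => expR (a ^+ 2 * bern_dot u s ^+ 2 / 2)))%:E <=
  \int[normal_prob 0 1]_z (expR (a ^+ 2 * z ^+ 2 / 2))%:E)%E.
Proof.
move=> Hu; rewrite bern_gauss; apply: ge0_le_integral => //.
- by move=> z _; rewrite lee_fin prodr_ge0 // => i _; exact: ch_ge0.
- apply/measurable_EFinP.
  have := @measurable_ch_prod n (fun i => a * u 0 i).
  by apply: eq_measurable_fun => z _; apply: eq_bigr => i _; rewrite mulrA.
- apply/measurable_EFinP; apply: measurableT_comp => //.
  do ?[apply: measurable_funM => //]; exact: measurable_funX.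
move=> z _; rewrite lee_fin.
apply: (@le_trans _ _ (\prod_(i < n) expR ((z * a * u 0 i) ^+ 2 / 2))).
  by apply: ler_prod => i _; rewrite ch_ge0 ch_le.
rewrite -expR_sum.
under eq_bigr do rewrite exprMn mulrAC.
by rewrite -mulr_sumr Hu mulr1 exprMn (mulrC (z ^+ 2)).
Qed.
End S4.
Section S7.
Context {R : realType}.
Lemma bernoulli_ineq (x : R) n : -1 <= x -> 1 + n%:R * x <= (1 + x) ^+ n.
Proof.
move=> x1; elim: n => [|n IH]; first by rewrite mul0r addr0 expr0.
rewrite exprS.
have h : 0 <= 1 + x by rewrite -lerBlDl sub0r.
apply: (@le_trans _ _ ((1 + x) * (1 + n%:R * x))); last exact: ler_wpM2l.
rewrite mulrDr mulr1 mulrDl mul1r -natr1.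
have : 0 <= n%:R * x ^+ 2 by rewrite mulr_ge0 // sqr_ge0.
nra.
Qed.

Lemma onePs_ge (s : R) : 0 <= s -> expR s * (1 - s ^+ 2) <= 1 + s.
Proof.
move=> s0.
have h1 := expR_ge1Dx (- s).
have h2 : 0 <= (1 + s) * expR s by rewrite mulr_ge0 ?expR_ge0 // addr_ge0.
have -> : 1 + s = (1 + s) * expR s * expR (- s) by rewrite -mulrA expRxMexpNx_1 mulr1.
apply: (@le_trans _ _ ((1 + s) * expR s * (1 - s))); last first.
  by rewrite ler_wpM2l.
by rewrite le_eqVlt; apply/orP; left; apply/eqP; ring.
Qed.

Lemma pow_lb (A : R) n : 0 <= A -> (0 < n)%N -> A ^+ 2 <= n%:R ->
  expR A * (1 - A ^+ 2 / n%:R) <= (1 + A / n%:R) ^+ n.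
Proof.
move=> A0 n0 An.
have nR : 0 < n%:R :> R by rewrite ltr0n.
set s := A / n%:R.
have s0 : 0 <= s by rewrite divr_ge0 // ltW.
have s1 : s ^+ 2 <= 1.
  rewrite /s exprMn exprVn ler_pdivrMr ?exprn_gt0 // mul1r.
  apply: (le_trans An); rewrite -[leLHS]mulr1 expr2; apply: ler_wpM2l; first exact: ltW.
  by rewrite ler1n.
have -> : expR A = expR s ^+ n.
  by rewrite -expRM_natl /s mulrC divfK // gt_eqF.
have -> : A ^+ 2 / n%:R = n%:R * s ^+ 2.
  by rewrite /s; field; rewrite gt_eqF.
apply: (@le_trans _ _ (expR s ^+ n * (1 - s ^+ 2) ^+ n)).
  apply: ler_wpM2l; first by rewrite exprn_ge0 // expR_ge0.
  rewrite -mulrN.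
  by apply: bernoulli_ineq; rewrite lerNl opprK.
rewrite -exprMn; apply: lerXn2r.
- by rewrite nnegrE mulr_ge0 ?expR_ge0 // subr_ge0.
- by rewrite nnegrE addr_ge0.
exact: onePs_ge.
Qed.
End S7.
Section S8.
Context {R : realType}.
Local Notation t0 := (Num.sqrt 8 / Num.sqrt 3 : R).

Lemma t0_gt0 : 0 < t0.
Proof. by rewrite divr_gt0 // sqrtr_gt0. Qed.

Lemma t0_sqr : t0 ^+ 2 = 8 / 3.
Proof. by rewrite exprMn exprVn !sqr_sqrtr. Qed.

Lemma psi_conv (t y : R) : 0 < t ->
  y ^+ 2 / t ^+ 2 = (Num.sqrt 2 / t) ^+ 2 * y ^+ 2 / 2.
Proof.
move=> t0; rewrite exprMn exprVn sqr_sqrtr //; field.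
by rewrite gt_eqF // exprn_gt0.
Qed.

Lemma part1 n (u : 'rV[R]_n) : unit_sphere u ->
  forall sigma : R, 0 < sigma < 1 ->
    ((bern_E (fun s => expR (sigma ^+ 2 * bern_dot u s ^+ 2 / 2)))%:E
       <= gauss_E (fun z => expR (sigma ^+ 2 * z ^+ 2 / 2)))%E /\
    gauss_E (fun z => expR (sigma ^+ 2 * z ^+ 2 / 2))
       = ((Num.sqrt (1 - sigma ^+ 2))^-1)%:E.
Proof.
move=> Hu sigma /andP[s0 s1]; split; first exact: bern_le.
apply: gauss_sq; rewrite sqr_ge0 /=.
by rewrite expr_lt1 // ltW.
Qed.

Lemma t0_in n (u : 'rV[R]_n) : unit_sphere u ->
  bern_E (fun s => expR (bern_dot u s ^+ 2 / t0 ^+ 2)) <= 2.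
Proof.
move=> Hu.
have -> : (fun s => expR (bern_dot u s ^+ 2 / t0 ^+ 2)) =
   (fun s => expR ((Num.sqrt 2 / t0) ^+ 2 * bern_dot u s ^+ 2 / 2)).
  by apply/funext => s; rewrite psi_conv // t0_gt0.
have a2 : (Num.sqrt 2 / t0) ^+ 2 = 3 / 4.
  by rewrite exprMn exprVn sqr_sqrtr // t0_sqr; field.
rewrite -lee_fin; apply: (le_trans (@bern_le _ _ u _ Hu)).
rewrite a2 gauss_sq; last by apply/andP; split; lra.
have -> : 1 - 3 / 4 = (2 ^-1) ^+ 2 :> R by field.
by rewrite sqrtr_sqr ger0_norm ?invrK // invr_ge0.
Qed.

Lemma psi2_le n (u : 'rV[R]_n) : unit_sphere u -> bern_psi2 (bern_dot u) <= t0.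
Proof.
move=> Hu; rewrite /bern_psi2; apply: ge_inf.
- by exists 0 => t [] /ltW.
- by split; [exact: t0_gt0 | exact: t0_in].
Qed.

Lemma alpha_le n : @alpha R n <= t0.
Proof.
rewrite /alpha.
have [->|ne] := eqVneq [set bern_psi2 (bern_dot u) | u in @unit_sphere R n] set0.
  by rewrite sup0 ltW // t0_gt0.
apply: ge_sup; first exact/set0P.
by move=> _ [u Hu <-]; exact: psi2_le.
Qed.

Definition fseq (c : R) (k : nat) (z : R) :=
  expR (c * z ^+ 2 / 2) * Num.max 0 (1 - (c * z ^+ 2 / 2) ^+ 2 / k.+1%:R).

Lemma fseq_ge0 c k z : 0 <= fseq c k z.
Proof. by rewrite /fseq mulr_ge0 ?expR_ge0 // le_max lexx. Qed.

Lemma measurable_fseq c k : measurable_fun [set: R] (fseq c k).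
Proof.
have mB : measurable_fun [set: R] (fun z : R => c * z ^+ 2 / 2).
  by do ?[apply: measurable_funM => //]; exact: measurable_funX.
apply: measurable_funM; first exact: measurableT_comp.
apply: measurable_maxr => //.
apply: measurable_funB => //; apply: measurable_funM => //.
exact: measurable_funX.
Qed.

Lemma fseq_nd c z : {homo (fun k => fseq c k z) : n m / (n <= m)%N >-> n <= m}.
Proof.
move=> n m nm; rewrite /fseq; apply: ler_wpM2l; first exact: expR_ge0.
set B := (c * z ^+ 2 / 2) ^+ 2.
have hab : 1 - B / n.+1%:R <= 1 - B / m.+1%:R.
  rewrite lerB //; apply: ler_wpM2l; first exact: sqr_ge0.
  by rewrite lef_pV2 ?posrE ?ltr0n // ler_nat.
by rewrite ge_max !le_max lexx hab orbT.
Qed.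

Lemma fseq_cvg c z : fseq c k z @[k --> \oo] --> expR (c * z ^+ 2 / 2).
Proof.
set B := c * z ^+ 2 / 2.
rewrite -[X in _ --> X]mulr1.
apply: cvgM; first exact: cvg_cst.
have h1 : (fun k => 1 - B ^+ 2 * harmonic k) @ \oo --> (1:R).
  rewrite -[X in _ --> X]subr0 -(mulr0 (B ^+ 2)).
  apply: cvgB; first exact: cvg_cst.
  apply: cvgM; first exact: cvg_cst.
  exact: cvg_harmonic.
apply: cvg_trans h1; apply: near_eq_cvg; near=> k.
rewrite /harmonic /= max_r // subr_ge0 ler_pdivrMr ?ltr0n // mul1r.
near: k.
exists (Num.truncn ((c * z ^+ 2 / 2) ^+ 2)) => // k /= hk.
apply: ltW; apply: (lt_le_trans (truncnS_gt _)).
by rewrite ler_nat.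
Unshelve. all: by end_near.
Qed.

Lemma mct_cvg (c : R) : 0 <= c < 1 ->
  (\int[normal_prob 0 1]_z (fseq c k z)%:E)%E @[k --> \oo] -->
  ((Num.sqrt (1 - c))^-1)%:E.
Proof.
move=> hc; rewrite -gauss_sq //.
have H := @cvg_monotone_convergence _ _ R (normal_prob 0 1) setT measurableT
  (fun k z => (fseq c k z)%:E).
suff <- : (\int[normal_prob 0 1]_(x in setT) limn (fun k => (fseq c k x)%:E))%E =
  (\int[normal_prob 0 1]_x (expR (c * x ^+ 2 / 2))%:E)%E.
  apply: H.
  - by move=> k; apply/measurable_EFinP; exact: measurable_fseq.
  - by move=> k z _; rewrite lee_fin fseq_ge0.
  - by move=> z _ n m nm; rewrite lee_fin fseq_nd.
apply: eq_integral => z _.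
transitivity ((limn (fun k => fseq c k z))%:E).
  exact: (EFin_lim (cvgP _ (fseq_cvg c z))).
by rewrite (cvg_lim _ (fseq_cvg c z)).
Qed.

End S8.
Section S10.
Context {R : realType}.
Local Notation t0 := (Num.sqrt 8 / Num.sqrt 3 : R).

Definition urow (n : nat) : 'rV[R]_n := \row_(i < n) (Num.sqrt n%:R)^-1.

Lemma urow_sphere k : unit_sphere (urow k.+1).
Proof.
rewrite /unit_sphere /=.
under eq_bigr do rewrite mxE.
rewrite sumr_const card_ord exprVn sqr_sqrtr // -[_ *+ k.+1]mulr_natr mulVf //.
Qed.

Lemma g_ge_f k (a z : R) :
  fseq (a ^+ 2) k z <= \prod_(i < k.+1) ch (z * a * urow k.+1 0 i).
Proof.
under eq_bigr do rewrite mxE.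
rewrite prodr_const card_ord.
set N := k.+1.
have NR : 0 < N%:R :> R by rewrite ltr0n.
set A := a ^+ 2 * z ^+ 2 / 2.
rewrite /fseq -/A.
have [hA|hA] := leP (1 - A ^+ 2 / N%:R) 0.
  by rewrite mulr0 exprn_ge0 // ch_ge0.

have A0 : 0 <= A by rewrite /A divr_ge0 // mulr_ge0 // sqr_ge0.
have AN : A ^+ 2 <= N%:R.
  by move: hA; rewrite subr_gt0 ltr_pdivrMr // mul1r => /ltW.
apply: (le_trans (pow_lb A N A0 (ltn0Sn k) AN)).
apply: lerXn2r.
- by rewrite nnegrE addr_ge0 // divr_ge0 // ltW.
- by rewrite nnegrE ch_ge0.
apply: le_trans (ch_ge _).
rewrite lerD2l /A exprMn exprMn exprVn sqr_sqrtr ?ler0n //.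
rewrite le_eqVlt; apply/orP; left; apply/eqP; field.
by rewrite gt_eqF.
Qed.

Lemma bern_E_mono n (f g : {ffun 'I_n -> bool} -> R) :
  (forall s, f s <= g s) -> bern_E f <= bern_E g.
Proof.
move=> fg; rewrite /bern_E; apply: ler_wpM2l; first by rewrite invr_ge0 exprn_ge0.
by apply: ler_sum => s _; exact: fg.
Qed.

Lemma psi2_ge n (Y : {ffun 'I_n -> bool} -> R) (t : R) : 0 < t ->
  2 < bern_E (fun s => expR (Y s ^+ 2 / t ^+ 2)) ->
  [set t : R | 0 < t /\ bern_E (fun s => expR (Y s ^+ 2 / t ^+ 2)) <= 2] !=set0 ->
  t <= bern_psi2 Y.
Proof.
move=> t0 h2 ne; apply: lb_le_inf => // s [s0 hs].
rewrite leNgt; apply/negP => st.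
have : bern_E (fun s => expR (Y s ^+ 2 / t ^+ 2)) <= 2.
  apply: le_trans hs; apply: bern_E_mono => x.
  rewrite ler_expR; apply: ler_wpM2l; first exact: sqr_ge0.
  rewrite lef_pV2 ?posrE ?exprn_gt0 //.
  by apply: lerXn2r; rewrite ?nnegrE ?ltW.
by rewrite leNgt h2.
Qed.

Lemma alpha_ge n (u : 'rV[R]_n) : unit_sphere u ->
  bern_psi2 (bern_dot u) <= alpha n.
Proof.
move=> Hu; rewrite /alpha; apply: ub_le_sup; last by exists u.
by exists t0 => _ [v Hv <-]; exact: psi2_le.
Qed.

Lemma alpha_lb (t : R) : Num.sqrt 2 < t < t0 -> \forall n \near \oo, t <= @alpha R n.
Proof.
case/andP => t2 tt0.
have tpos : 0 < t by apply: le_lt_trans t2; exact: sqrtr_ge0.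
set a := Num.sqrt 2 / t.
set c := a ^+ 2.
have cE : c = 2 / t ^+ 2 by rewrite /c /a exprMn exprVn sqr_sqrtr.
have hc : 0 <= c < 1.
  apply/andP; split; first exact: sqr_ge0.
  rewrite cE ltr_pdivrMr ?exprn_gt0 // mul1r.
  have := sqr_sqrtr (ler0n R 2); move=> <-.
  by rewrite ltrXn2r // sqrtr_ge0.
have hc34 : 3 / 4 < c.
  rewrite cE ltr_pdivlMr ?exprn_gt0 //.
  have : t ^+ 2 < t0 ^+ 2 by rewrite ltrXn2r // ltW.
  rewrite t0_sqr => h; lra.
have L := mct_cvg c hc.
set L0 := (Num.sqrt (1 - c))^-1.
have L02 : 2 < L0.
  rewrite /L0 -[X in X < _]invrK ltf_pV2 ?posrE ?invr_gt0 ?sqrtr_gt0 ?subr_gt0 //; last by case/andP: hc.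
  have -> : (2^-1 : R) = Num.sqrt (4^-1).
    by rewrite (_ : (4^-1 : R) = 2^-1 ^+ 2) ?sqrtr_sqr ?ger0_norm //; field.
  rewrite ltr_sqrt //; lra.
set M := (L0 + 2) / 2.
have M2 : 2 < M by rewrite /M; lra.
have ML : (M%:E < limn (fun k => \int[normal_prob 0 1]_z (fseq c k z)%:E))%E.
  rewrite (cvg_lim _ L) // lte_fin /M -/L0; lra.
have nd : nondecreasing_seq (fun k => \int[normal_prob 0 1]_z (fseq c k z)%:E)%E.
  move=> m k mk; apply: ge0_le_integral => //.
  - by move=> z _; rewrite lee_fin fseq_ge0.
  - by apply/measurable_EFinP; exact: measurable_fseq.
  - by apply/measurable_EFinP; exact: measurable_fseq.
  - by move=> z _; rewrite lee_fin fseq_nd.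
have [N0 _ HN0] := lte_lim nd (cvgP _ L) ML.
exists N0.+1 => // n /= hn.
have -> : n = n.-1.+1 by rewrite prednK // (leq_trans _ hn).
set k := n.-1.
have kN : (N0 <= k)%N by rewrite /k -ltnS prednK // (leq_trans _ hn).
have Hu := urow_sphere k.
apply: (le_trans _ (alpha_ge _ _ Hu)).
apply: psi2_ge => //; last by exists t0; split; [exact: t0_gt0 | exact: t0_in].
have -> : (fun s => expR (bern_dot (urow k.+1) s ^+ 2 / t ^+ 2)) =
   (fun s => expR (a ^+ 2 * bern_dot (urow k.+1) s ^+ 2 / 2)).
  by apply/funext => s; rewrite psi_conv.
rewrite -lte_fin bern_gauss.
apply: (@lt_le_trans _ _ (\int[normal_prob 0 1]_z (fseq c k z)%:E)%E).
  by apply: (lt_le_trans _ (HN0 k kN)); rewrite lte_fin.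
apply: ge0_le_integral => //.
- by move=> z _; rewrite lee_fin fseq_ge0.
- by apply/measurable_EFinP; exact: measurable_fseq.
- apply/measurable_EFinP.
  have := @measurable_ch_prod R k.+1 (fun i => a * urow k.+1 0 i).
  by apply: eq_measurable_fun => z _; apply: eq_bigr => i _; rewrite mulrA.
by move=> z _; rewrite lee_fin g_ge_f.
Qed.
End S10.

Theorem theoremB1 (R : realType) :
  (forall (n : nat) (u : 'rV[R]_n), @unit_sphere R n u ->
     forall sigma : R, 0 < sigma < 1 ->
       ((bern_E (fun s => expR (sigma ^+ 2 * bern_dot u s ^+ 2 / 2)))%:E
          <= gauss_E (fun z => expR (sigma ^+ 2 * z ^+ 2 / 2)))%E /\
       gauss_E (fun z => expR (sigma ^+ 2 * z ^+ 2 / 2))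
          = ((Num.sqrt (1 - sigma ^+ 2))^-1)%:E) /\
  (forall n : nat, @alpha R n <= Num.sqrt 8 / Num.sqrt 3) /\
  ((fun n : nat => @alpha R n) @ \oo --> (Num.sqrt 8 / Num.sqrt 3 : R)).
Proof.
split; first exact: part1.
split; first exact: alpha_le.
set t0 := (Num.sqrt 8 / Num.sqrt 3 : R).
have s2t0 : Num.sqrt 2 < t0.
  have p0 : 0 <= Num.sqrt 2 :> R by exact: sqrtr_ge0.
  have p2 : Num.sqrt 2 ^+ 2 = 2 :> R by rewrite sqr_sqrtr.
  have q0 : 0 < t0 by exact: t0_gt0.
  have q2 : t0 ^+ 2 = 8 / 3 by exact: t0_sqr.
  nra.
apply/cvgrPdist_lt => e e0.
set m := Num.max (t0 - e) (Num.sqrt 2).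
have m1 : t0 - e <= m by rewrite le_max lexx.
have m2 : Num.sqrt 2 <= m by rewrite le_max lexx orbT.
have m3 : m < t0 by rewrite gt_max s2t0 andbT; lra.
set tt := (t0 + m) / 2.
have htt : Num.sqrt 2 < tt < t0 by apply/andP; split; rewrite /tt; lra.
have := alpha_lb tt htt; apply: filterS => n hn.
have := @alpha_le R n; rewrite -/t0 => hle.
rewrite ger0_norm ?subr_ge0 //.
rewrite /tt in hn; lra.
Qed.
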